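(* Let $\omega\ge2$ and let $\Gamma$ be an $\omega$-clique regular finite simple graph with $m$ cliques of order $\omega$, listed as $c_1,\dots,c_m$. Let $A_C$ be the adjacency matrix of $C_\omega(\Gamma)$ with vertices ordered $c_1,\dots,c_m$, and let $A_L$ be the adjacency matrix of the line graph $L(\Gamma)$ with the edges ordered $e_1,\dots,e_{m\binom{\omega}{2}}$ so that, for each $i$, the edges $e_{(i-1)\binom{\omega}{2}+1},\dots,e_{i\binom{\omega}{2}}$ are exactly the edges of the clique $c_i$. Let $\tilde A=6\binom{\omega}{3}I_m+(\omega-1)^2A_C$, and let $\varphi:\mathbb{R}^m\to\mathbb{R}^{m\binom{\omega}{2}}$ map $(a_1,\dots,a_m)^T$ to the vector obtained by repeating each coordinate $a_i$ consecutively $\binom{\omega}{2}$ times. Then for all $v\in\mathbb{R}^m$, \[v^T\tilde A v=\varphi(v)^T A_L\,\varphi(v).\]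
   Context: A graph is $\omega$-clique regular if it has a nonempty edge set and every edge lies in exactly one clique of order $\omega$ (so the edge sets of the $\omega$-cliques partition the edge set). $C_\omega(\Gamma)$ has as vertices the cliques of order $\omega$, two distinct ones adjacent iff they have nonempty intersection. $L(\Gamma)$ is the line graph (vertices = edges of $\Gamma$, adjacent iff sharing an endpoint). *)

(* Defs.v *)
From HB Require Import structures.
From mathcomp Require Import all_boot all_order all_algebra.
Set Implicit Arguments. Unset Strict Implicit. Unset Printing Implicit Defensive.
Import Order.TTheory GRing.Theory Num.Theory.
Local Open Scope ring_scope.

Section Graph.
Variables (T : finType) (adj : rel T).

Definition simple_graph := symmetric adj /\ irreflexive adj.

Definition is_complete (Q : {set T}) : bool :=
  [forall x in Q, forall y in Q, (x != y) ==> adj x y].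

Definition is_clique_of_order (w : nat) (Q : {set T}) : bool :=
  (#|Q| == w)%N && is_complete Q.

Definition is_edge (E : {set T}) : bool := (#|E| == 2)%N && is_complete E.

Definition clique_regular (w : nat) : Prop :=
  (exists x y, adj x y) /\
  forall E : {set T}, is_edge E ->
    #|[set Q : {set T} | is_clique_of_order w Q & E \subset Q]| = 1%N.
End Graph.

Lemma blk_lt (m k : nat) (j : 'I_(m * k)) : (j %/ k < m)%N.
Proof.
have := ltn_ord j; move: (nat_of_ord j) => n; clear j.
case: k => [|k]; first by rewrite muln0.
by rewrite ltn_divLR.
Qed.

(* block index of j : the i with (i-1)k < j <= ik in 1-based indexing *)
Definition blk (m k : nat) (j : 'I_(m * k)) : 'I_m := Ordinal (blk_lt j).

Definition phi (R : Type) (m k : nat) (v : 'cV[R]_m) : 'cV[R]_(m * k) :=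
  \col_(j < m * k) v (blk j) 0.

Definition inter_adj_mx (R : nzRingType) (T : finType) (n : nat)
  (c : 'I_n -> {set T}) : 'M[R]_n :=
  \matrix_(i, i') ((i != i') && (c i :&: c i' != set0))%:R.

(* Main.v *)
Require Import Defs.
From HB Require Import structures.
From mathcomp Require Import all_boot all_order all_algebra.
From mathcomp Require Import ring zify.
Import Order.TTheory GRing.Theory Num.Theory.
Local Open Scope ring_scope.


Lemma complete_sub (T : finType) (adj : rel T) (A B : {set T}) :
  is_complete adj B -> A \subset B -> is_complete adj A.
Proof.
move=> /forallP HB sAB; apply/forallP => x; apply/implyP => xA.
apply/forallP => y; apply/implyP => yA.
by move: (HB x) => /implyP /(_ (subsetP sAB x xA)) /forallP /(_ y) /implyP /(_ (subsetP sAB y yA)).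
Qed.

Lemma pair_edge (T : finType) (adj : rel T) (Q : {set T}) x y :
  is_complete adj Q -> x \in Q -> y \in Q -> x != y -> is_edge adj [set x; y].
Proof.
move=> HQ xQ yQ xy; rewrite /is_edge cards2 xy eqxx /=.
apply: (@complete_sub _ _ _ Q HQ); apply/subsetP => z; rewrite !inE => /orP[]/eqP->//.
Qed.

Lemma clique_inter (T : finType) (adj : rel T) (w : nat) (Q1 Q2 : {set T}) :
  clique_regular adj w -> is_clique_of_order adj w Q1 -> is_clique_of_order adj w Q2 ->
  Q1 != Q2 -> (#|Q1 :&: Q2| <= 1)%N.
Proof.
move=> [_ Hreg] H1 H2 ne; rewrite leqNgt; apply/negP => /card_gt1P [x [y [xI yI xy]]].
move: xI yI; rewrite !inE => /andP[x1 x2] /andP[y1 y2].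
have /andP[_ C1] := H1.
have E := @pair_edge _ _ _ _ _ C1 x1 y1 xy.
have := Hreg _ E.
have sub : forall Q : {set T}, x \in Q -> y \in Q -> [set x; y] \subset Q.
  by move=> Q xQ yQ; apply/subsetP => z; rewrite !inE => /orP[]/eqP->.
have : (1 < #|[set Q : {set T} | is_clique_of_order adj w Q & [set x; y] \subset Q]|)%N.
  apply/card_gt1P; exists Q1, Q2; split => //; rewrite inE ?H1 ?H2 ?sub //.
by move=> /[swap] ->.
Qed.


Lemma block_count (T : finType) (adj : rel T) (w m k : nat)
  (c : 'I_m -> {set T}) (f : 'I_(m * k) -> {set T}) (i : 'I_m) (x : T) :
  (forall i, is_clique_of_order adj w (c i)) ->
  injective f ->
  (forall j, is_edge adj (f j)) ->
  (forall j, f j \subset c (blk j)) ->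
  (forall i (E : {set T}), is_edge adj E -> E \subset c i ->
     exists j, blk j = i /\ f j = E) ->
  #|[set j | (blk j == i) && (x \in f j)]| = ((x \in c i) * (w - 1))%N.
Proof.
move=> Hc finj Hf Hsub Hex.
case xi: (x \in c i); last first.
  apply/eqP; rewrite mul0n cards_eq0; apply/eqP/setP => j; rewrite !inE.
  apply/negbTE/negP => /andP[/eqP bj xf].
  by move: (subsetP (Hsub j) x xf); rewrite bj xi.
rewrite mul1n -(card_in_imset (f:=f)); last by move=> a b _ _; apply: finj.
have -> : f @: [set j | (blk j == i) && (x \in f j)] =
          (fun y => [set x; y]) @: (c i :\ x).
  apply/setP => E; apply/imsetP/imsetP.
    move=> [j]; rewrite inE => /andP[/eqP bj xf] ->.
    have /andP[/cards2P [a [b [ab fab]]] _] := Hf j.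
    have bc : f j \subset c i by rewrite -bj.
    move: xf bc; rewrite fab !inE => /orP[]/eqP xe; subst x => bc.
      exists b; last by [].
      by rewrite !inE eq_sym ab /= (subsetP bc) // !inE eqxx orbT.
    exists a; last by rewrite setUC.
    by rewrite !inE ab /= (subsetP bc) // !inE eqxx.
  move=> [y]; rewrite !inE => /andP[yx yc] ->.
  have /andP[_ Cc] := Hc i.
  have xy : x != y by rewrite eq_sym.
  have Ee := @pair_edge _ _ _ _ _ Cc xi yc xy.
  have sE : [set x; y] \subset c i.
    by apply/subsetP => z; rewrite !inE => /orP[]/eqP->.
  have [j [bj fj]] := Hex i _ Ee sE.
  by exists j; rewrite // inE bj eqxx fj !inE eqxx.
rewrite card_in_imset.
  have := cardsD1 x (c i); rewrite xi; have /andP[/eqP -> _] := Hc i.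
  by move=> ->; rewrite add1n subn1.
move=> a b; rewrite !inE => /andP[ax _] /andP[bx _] /setP /(_ a).
rewrite !inE eqxx orbT (negbTE ax) /= => /esym/eqP.
done.
Qed.


Lemma quad_sum (R : comNzRingType) n (M : 'M[R]_n) (x : 'cV[R]_n) :
  (x^T *m M *m x) 0 0 = \sum_i \sum_j x i 0 * M i j * x j 0.
Proof.
rewrite mxE exchange_big /=; apply: eq_bigr => j _.
by rewrite mxE big_distrl /=; apply: eq_bigr => i _; rewrite mxE.
Qed.

Lemma sum_ind_card (R : nzRingType) (I : finType) (P Q : pred I) :
  \sum_(j | P j) (Q j)%:R = #|[set j | P j && Q j]|%:R :> R.
Proof.
rewrite -sum1_card natr_sum big_mkcond [RHS]big_mkcond /=.
by apply: eq_bigr => j _; rewrite inE; case: (P j); case: (Q j).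
Qed.

Lemma cardI_sum (R : nzRingType) (T : finType) (A B : {set T}) :
  #|A :&: B|%:R = \sum_t (t \in A)%:R * (t \in B)%:R :> R.
Proof.
rewrite -sum1_card natr_sum big_mkcond /=.
apply: eq_bigr => t _; rewrite inE; case: (t \in A); case: (t \in B);
  by rewrite ?mulr0 ?mulr1 ?mul0r.
Qed.

Lemma gen_quad (R : comNzRingType) (T : finType) n (x : 'I_n -> R) (S : 'I_n -> {set T}) (al be : R) :
  \sum_i \sum_j x i * (al * #|S i :&: S j|%:R - be * (i == j)%:R) * x j =
  al * \sum_t (\sum_i x i * (t \in S i)%:R) ^+ 2 - be * \sum_i x i ^+ 2.
Proof.
have -> : \sum_i \sum_j x i * (al * #|S i :&: S j|%:R - be * (i == j)%:R) * x j =
  \sum_i \sum_j (al * (x i * #|S i :&: S j|%:R * x j)) - \sum_i \sum_j (be * (x i * (i == j)%:R * x j)).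
  rewrite -sumrB; apply: eq_bigr => i _; rewrite -sumrB; apply: eq_bigr => j _.
  by ring.
congr (_ - _).
  under eq_bigr do rewrite -mulr_sumr.
  rewrite -mulr_sumr; congr (_ * _).
  under eq_bigr => i _ do under eq_bigr => j _ do rewrite cardI_sum mulr_sumr mulr_suml.
  under eq_bigr => i _ do rewrite exchange_big /=.
  rewrite exchange_big /=; apply: eq_bigr => t _.
  rewrite expr2 mulr_suml; apply: eq_bigr => i _; rewrite mulr_sumr; apply: eq_bigr => j _.
  by ring.
rewrite mulr_sumr; apply: eq_bigr => i _; rewrite -mulr_sumr; congr (_ * _).
rewrite (bigD1 i) //= big1 ?addr0; first by rewrite eqxx mulr1 expr2.
by move=> j /negbTE ji; rewrite eq_sym ji mulr0 mul0r.
Qed.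


Lemma nat_id w : (2 <= w)%N -> (6 * 'C(w, 3) + (w-1)*w = (w-1)^2 * w)%N.
Proof.
move=> hw. have h := bin_ffact w 3.
case: w hw h => [|[|n]] // _. rewrite (_ : 3`! = 6) // !ffactSS ffactn1 => h.
nia.
Qed.

Lemma card_sumR (R : nzRingType) (T : finType) (A : {set T}) :
  #|A|%:R = \sum_t (t \in A)%:R :> R.
Proof. rewrite -sum1_card natr_sum big_mkcond /=; apply: eq_bigr => t _; by case: (t \in A). Qed.

Lemma blk_sum (R : comNzRingType) (T : finType) (adj : rel T) (w m k : nat)
  (c : 'I_m -> {set T}) (f : 'I_(m * k) -> {set T}) (g : 'I_m -> R) (t : T) :
  (forall i, is_clique_of_order adj w (c i)) ->
  injective f ->
  (forall j, is_edge adj (f j)) ->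
  (forall j, f j \subset c (blk j)) ->
  (forall i (E : {set T}), is_edge adj E -> E \subset c i ->
     exists j, blk j = i /\ f j = E) ->
  \sum_j g (blk j) * (t \in f j)%:R = (w - 1)%:R * \sum_i g i * (t \in c i)%:R.
Proof.
move=> Hc finj Hf Hsub Hex.
rewrite (partition_big (fun j => blk j) predT) //= mulr_sumr; apply: eq_bigr => i _.
rewrite (eq_bigr (fun j => g i * (t \in f j)%:R)); last by move=> j /= /eqP ->.
rewrite -mulr_sumr sum_ind_card.
rewrite (eq_card (B := [set j | (blk j == i) && (t \in f j)])); last first.
  by move=> j; rewrite !inE.
rewrite (@block_count _ _ _ _ _ _ _ i t Hc finj Hf Hsub Hex) natrM; ring.
Qed.

Lemma f_entry (R : nzRingType) (T : finType) n (f : 'I_n -> {set T}) :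
  injective f -> (forall j, #|f j| = 2%N) -> forall j j',
  ((j != j') && (f j :&: f j' != set0))%:R = 1 * #|f j :&: f j'|%:R - 2 * (j == j')%:R :> R.
Proof.
move=> finj H2 j j'; case: (eqVneq j j') => [<-|ne].
  by rewrite setIid H2 /= mul1r mulr1 subrr.
have le1 : (#|f j :&: f j'| <= 1)%N.
  rewrite leqNgt; apply/negP => gt1.
  have e1 : f j :&: f j' == f j by rewrite eqEcard subsetIl H2.
  have s1 : f j \subset f j' by rewrite -(eqP e1) subsetIr.
  have : f j == f j' by rewrite eqEcard s1 !H2.
  by move=> /eqP /finj /eqP; rewrite (negbTE ne).
rewrite /= mulr0 subr0 mul1r -cards_eq0.
by case: #|_| le1 => [|[|]].
Qed.

Lemma c_entry (R : nzRingType) (T : finType) (adj : rel T) (w m : nat)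
  (c : 'I_m -> {set T}) :
  (2 <= w)%N -> clique_regular adj w -> injective c ->
  (forall i, is_clique_of_order adj w (c i)) -> forall i i',
  ((6 * 'C(w, 3))%:R%:M + ((w - 1) ^ 2)%:R *: inter_adj_mx R c) i i' =
  ((w - 1) ^ 2)%:R * #|c i :&: c i'|%:R - ((w - 1) * w)%:R * (i == i')%:R :> R.
Proof.
move=> hw reg cinj Hc i i'; rewrite !mxE.
case: (eqVneq i i') => [<-|ne].
  rewrite /= setIid mulr0 addr0 mulr1n mulr1 -natrM.
  have /andP[/eqP -> _] := Hc i.
  by apply/eqP; rewrite eq_sym subr_eq -natrD (nat_id w hw).
have cne : c i != c i' by apply: contra ne => /eqP /cinj ->.
have le1 := @clique_inter _ _ _ _ _ reg (Hc i) (Hc i') cne.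
rewrite mulr0n add0r /= mulr0 subr0 -cards_eq0.
by case: #|_| le1 => [|[|]].
Qed.


Theorem lemma3 (R : realFieldType) (T : finType) (adj : rel T) (w m : nat)
  (c : 'I_m -> {set T}) (f : 'I_(m * 'C(w, 2)) -> {set T}) :
  (2 <= w)%N ->
  simple_graph adj ->
  clique_regular adj w ->
  (* c_1, ..., c_m lists the cliques of order w *)
  injective c ->
  (forall i, is_clique_of_order adj w (c i)) ->
  (forall Q : {set T}, is_clique_of_order adj w Q -> exists i, c i = Q) ->
  (* e_1, ..., e_{m C(w,2)} lists the edges, block i = edges of c_i *)
  injective f ->
  (forall j, is_edge adj (f j)) ->
  (forall E : {set T}, is_edge adj E -> exists j, f j = E) ->
  (forall j, f j \subset c (blk j)) ->
  (forall i (E : {set T}), is_edge adj E -> E \subset c i ->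
     exists j, blk j = i /\ f j = E) ->
  forall v : 'cV[R]_m,
    v^T *m ((6 * 'C(w, 3))%:R%:M + ((w - 1) ^ 2)%:R *: inter_adj_mx R c) *m v
    = (phi 'C(w, 2) v)^T *m inter_adj_mx R f *m phi 'C(w, 2) v.
Proof.
move=> hw _ reg cinj Hc _ finj Hf _ Hsub Hex v.
have H2 : forall j, #|f j| = 2%N by move=> j; have /andP[/eqP -> _] := Hf j.
apply/matrixP => a b; rewrite !ord1 !quad_sum.
under eq_bigr do under eq_bigr do rewrite (@c_entry R _ _ _ _ c hw reg cinj Hc).
rewrite gen_quad.
under [RHS]eq_bigr do under eq_bigr do rewrite !mxE (@f_entry R _ _ f finj H2).
rewrite gen_quad.
under [X in _ = 1 * X - _]eq_bigr do rewrite (@blk_sum R _ _ _ _ _ _ f (fun i => v i 0) _ Hc finj Hf Hsub Hex).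
have -> : 2 * \sum_(j : 'I_(m * 'C(w, 2))) v (blk j) 0 ^+ 2 =
   \sum_t \sum_j (v (blk j) 0 ^+ 2) * (t \in f j)%:R.
  rewrite exchange_big mulr_sumr; apply: eq_bigr => j _.
  by rewrite -mulr_sumr -card_sumR H2 mulrC.
have hb := fun t => @blk_sum R _ _ _ _ _ _ f (fun i => v i 0 ^+ 2) t Hc finj Hf Hsub Hex.
simpl in hb.
under [X in _ = _ - X]eq_bigr do rewrite hb.
rewrite -mulr_sumr exchange_big /=.
under [X in _ = _ - _ * X]eq_bigr do rewrite -mulr_sumr -card_sumR.
have Hcw : forall i, #|c i| = w by move=> i; have /andP[/eqP -> _] := Hc i.
under [X in _ = _ - _ * X]eq_bigr do rewrite Hcw.
under [X in _ = _ * X - _]eq_bigr do rewrite exprMn.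
rewrite -mulr_sumr -mulr_suml natrM natrX.
ring.
Qed.
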